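(* There is a function $C_4(t,\epsilon)$ such that the following holds for every positive integer $t$ and every $\epsilon\in(0,1)$: let $G$ be a bipartite graph with $\delta(G)\geq C_4(t,\epsilon)$ which is induced $S_{t,t}$-free. Then for every path $x_1x_2x_3x_4x_5x_6$ of length $5$ in $G$ we have $|S_{N(x_1)}^{N(x_6)}(\epsilon)|\leq C_4(t,\epsilon)$.
   Context: For positive integers $a,b$, the biclaw $S_{a,b}$ is the graph with vertex set $\{x,x_1,\dots,x_a,y,y_1,\dots,y_b\}$ and edges $xy$, $xy_1,\dots,xy_b$, $yx_1,\dots,yx_a$. Induced $S_{t,t}$-free means no induced subgraph isomorphic to $S_{t,t}$. $N(v)$ is the neighbourhood of $v$, $\delta(G)$ the minimum degree. For vertex sets $X,Y$ and $\epsilon\in(0,1)$, $S_X^Y(\epsilon)=\{x\in X : |N(x)\cap Y|\leq (1-\epsilon)|Y|\}$. *)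

(* Defs.v *)
From HB Require Import structures.
From mathcomp Require Import all_boot all_order all_algebra.
From mathcomp Require Import reals.
Set Implicit Arguments. Unset Strict Implicit. Unset Printing Implicit Defensive.
Import Order.TTheory GRing.Theory Num.Theory.

(* Simple graphs: a symmetric irreflexive relation [adj] on a finite type. *)

Definition nbhd (T : finType) (adj : rel T) (v : T) : {set T} := [set u | adj v u].

Definition bipartite (T : finType) (adj : rel T) : Prop :=
  exists c : T -> bool, forall u v, adj u v -> c u != c v.

(* Vertices of the biclaw S_{a,b}:
   inl true = x, inl false = y, inr (inl i) = x_i, inr (inr j) = y_j. *)
Definition biclaw_vert (a b : nat) : finType := (bool + ('I_a + 'I_b))%type.

Definition biclaw_adj (a b : nat) : rel (biclaw_vert a b) :=
  fun u v =>
    match u, v with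
    | inl b1, inl b2 => b1 != b2
    | inl true, inr (inr _) => true
    | inr (inr _), inl true => true
    | inl false, inr (inl _) => true
    | inr (inl _), inl false => true
    | _, _ => false
    end.

Definition has_induced_biclaw (T : finType) (adj : rel T) (a b : nat) : Prop :=
  exists f : biclaw_vert a b -> T,
    injective f /\ forall u v, adj (f u) (f v) = biclaw_adj u v.

Definition Sset (R : realType) (T : finType) (adj : rel T) (X Y : {set T}) (eps : R)
  : {set T} :=
  [set x in X | (#|nbhd adj x :&: Y|%:R <= (1 - eps) * #|Y|%:R)%R].

(* Main.v *)
Require Import Defs.
From HB Require Import structures.
From mathcomp Require Import all_boot all_order all_algebra.
From mathcomp Require Import reals.
From mathcomp Require Import zify lra.
Import Order.TTheory GRing.Theory Num.Theory.
Set Implicit Arguments. Unset Strict Implicit. Unset Printing Implicit Defensive.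

Lemma arg1 k t i d d' w : i.+1 <= t -> d <= d' + i -> w <= d * k -> 2*k*t <= w -> w <= 2*k*d'.
Proof. move=> h1 h2 h3 h4. nia. Qed.
Lemma arg2 k t i a w w' S : 0 < k -> i.+1 <= t -> 2*k*t <= w -> w' = w - i ->
  a*w <= 2*k*S -> 2*k*S + w' <= w'*a -> w'*a <= w*a -> False.
Proof. move=> k0 h1 h2 h3 h4 h5 h6. rewrite mulnC in h4. have : w' = 0 by lia.
move=> e; move: h3; rewrite e => h3. have : k * t <= k * t by []. nia. Qed.
Lemma arg3 k d d2 r w y : d <= d2 + r -> y <= d*k -> 2*k*r <= y -> w <= y -> w <= d2*(2*k).
Proof. move=> h1 h2 h3 h4. nia. Qed.
Lemma arg4 k t s y : 0 < t -> 2*k*s <= 2*k*1 -> 2*(2*k)*t + 1 <= y -> 2*k*s <= y.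
Proof. move=> h1 h2 h3. have : k <= k * t by rewrite -{1}(muln1 k) leq_mul2l h1 orbT. nia. Qed.
Lemma e22 k : 2 * (2 * k) = 4 * k. Proof. lia. Qed.
Lemma ar1 k r s Y t : 0 < t -> 2*k*s <= 2*k*(r + 1) -> r*(4*k) < Y -> 8*k*t <= Y -> 2*k*s <= Y.
Proof. move=> t0 h1 h2 h3. have : 8*k <= 8*k*t by rewrite -{1}(muln1 (8*k)) leq_mul2l t0 orbT.
nia. Qed.
Lemma ar2 k r s w Y t : 0 < k -> 0 < t -> s <= r + 1 -> w + s = Y -> r*(4*k) < Y -> 8*k*t <= Y -> 2*(2*k)*t <= w.
Proof. move=> k0 t0 h1 h2 h3 h4. have : r * 4 <= r * (4*k) by rewrite leq_mul2l; lia.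
nia. Qed.
Lemma ar3 F Np D m2 : 4 * m2 + 1 <= Np -> F * Np <= 2 * (Np * D + m2 * F) -> F <= 4 * D.
Proof. move=> h1 h2. have h4 : 4 * m2 * F <= Np * F by apply: leq_mul => //; lia.
have : Np * F <= Np * (4 * D) by nia.
rewrite leq_pmul2l //; lia. Qed.

Section G.
Variables (T : finType) (adj : rel T).
Hypothesis adj_sym : symmetric adj.
Hypothesis adj_irr : irreflexive adj.
Variable c : T -> bool.
Hypothesis bip : forall u v, adj u v -> c u != c v.
Variable t : nat.
Hypothesis t0 : 0 < t.
Hypothesis nb : ~ has_induced_biclaw adj t t.
Local Notation N := (nbhd adj).


Lemma card_nonnb (W : {set T}) a : #|W :\: N a| = \sum_(w in W) ~~ adj a w.
Proof.
rewrite -sum1_card big_mkcond /= [RHS]big_mkcond /=; apply: eq_bigr => w _.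
by rewrite !inE; case: (w \in W); case: (adj a w).
Qed.

Lemma card_sep (A : {set T}) w : #|[set a in A | ~~ adj a w]| = \sum_(a in A) ~~ adj a w.
Proof.
rewrite -sum1_card big_mkcond /= [RHS]big_mkcond /=; apply: eq_bigr => a _.
by rewrite !inE; case: (a \in A); case: (adj a w).
Qed.

Lemma greedy k (A W : {set T}) : 0 < k ->
  (forall a, a \in A -> #|W| <= #|W :\: N a| * k) -> 2*k*t <= #|W| ->
  forall i, i <= t -> exists Ai Bi : {set T},
   [/\ Ai \subset A, Bi \subset W, #|Bi| = i, #|A| <= #|Ai| * (2*k)^i &
       forall a b, a \in Ai -> b \in Bi -> ~~ adj a b].
Proof.
move=> k0 hA hW; elim=> [|i IH] hi.
  exists A, set0; split; [exact: subxx|exact: sub0set|by rewrite cards0|by rewrite expn0 muln1|].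
  by move=> a b _; rewrite inE.
have [Ai [Bi [sA sB cB cA anti]]] := IH (ltnW hi).
set W' := W :\: Bi.
have cW' : #|W'| = #|W| - i.
  by rewrite /W' cardsD; move/setIidPr: sB => ->; rewrite cB.
have hd : forall a, a \in Ai -> #|W| <= 2 * k * #|W' :\: N a|.
  move=> a aA; have := hA a (subsetP sA a aA).
  have : #|W :\: N a| <= #|W' :\: N a| + i.
    rewrite -cB; apply: leq_trans (leq_card_setU _ _).
    apply: subset_leq_card; apply/subsetP => w; rewrite !inE.
    by case: (w \in Bi); case: (w \in W); case: (adj a w).
  move=> h1 h2; exact: (arg1 hi h1 h2 hW).
pose cnt w := #|[set a in Ai | ~~ adj a w]|.
have hsum : #|Ai| * #|W| <= 2 * k * \sum_(w in W') cnt w.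
  have -> : \sum_(w in W') cnt w = \sum_(a in Ai) #|W' :\: N a|.
    rewrite /cnt; under eq_bigr => w _ do rewrite card_sep.
    rewrite exchange_big /=; apply: eq_bigr => a _; by rewrite card_nonnb.
  rewrite big_distrr /= -sum_nat_const; apply: leq_sum => a aA; exact: hd.
case: (boolP [exists w in W', #|Ai| <= 2 * k * cnt w]) => [/existsP[w /andP[wW hw]]|hno].
  exists [set a in Ai | ~~ adj a w], (w |: Bi); split.
  - by apply/subsetP => a; rewrite inE => /andP[/(subsetP sA)].
  - by apply/subsetP => b; rewrite !inE => /orP[/eqP->|/(subsetP sB)//]; move: wW; rewrite inE => /andP[].
  - by rewrite cardsU1 cB; move: wW; rewrite inE => /andP[->].
  - rewrite expnS; apply: (leq_trans cA); rewrite mulnA leq_mul2r; apply/orP; right.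
    by rewrite mulnC.
  - move=> a b; rewrite !inE => /andP[aA naw] /orP[/eqP->//|bB]; exact: anti.
exfalso.
have hlt : forall w, w \in W' -> (2 * k * cnt w).+1 <= #|Ai|.
  move=> w wW; rewrite ltnNge; apply/negP => h; move/negP: hno; apply.
  by apply/existsP; exists w; rewrite wW.
have : \sum_(w in W') (2 * k * cnt w).+1 <= #|W'| * #|Ai|.
  rewrite -sum_nat_const; exact: leq_sum.
under eq_bigr => w _ do rewrite -addn1.
rewrite big_split /= sum1_card -big_distrr /=.
have : #|W'| * #|Ai| <= #|W| * #|Ai| by rewrite leq_mul2r cW' leq_subr orbT.
move=> h1 h2; exact: (arg2 k0 hi hW cW' hsum h2 h1).
Qed.


Lemma colN u v : u \in N v -> c u = ~~ c v.
Proof. rewrite inE => /bip; by case: (c u); case: (c v). Qed.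

Lemma nonadj u v : c u = c v -> adj u v = false.
Proof. move=> e; apply/negP => /bip; by rewrite e eqxx. Qed.

Lemma build_biclaw x y (A B : {set T}) : adj x y ->
  A \subset N x -> y \notin A -> B \subset N y -> x \notin B ->
  t <= #|A| -> t <= #|B| -> (forall a b, a \in A -> b \in B -> ~~ adj a b) ->
  has_induced_biclaw adj t t.
Proof.
move=> xy sA yA sB xB hA hB anti.
pose fA (i : 'I_t) := enum_val (widen_ord hA i).
pose fB (i : 'I_t) := enum_val (widen_ord hB i).
have fAin i : fA i \in A by apply: enum_valP.
have fBin i : fB i \in B by apply: enum_valP.
have cy : c y = ~~ c x by apply: (@colN y x); rewrite inE.
have cA i : c (fA i) = ~~ c x by apply: (@colN (fA i) x); exact: (subsetP sA).
have cB i : c (fB i) = c x by rewrite (colN (subsetP sB _ (fBin i))) cy negbK.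
have fAi : injective fA.
  move=> i j /enum_val_inj h; apply/val_inj; exact: (congr1 val h).
have fBi : injective fB.
  move=> i j /enum_val_inj h; apply/val_inj; exact: (congr1 val h).
pose f (u : biclaw_vert t t) : T := match u with
  | inl true => x | inl false => y | inr (inl i) => fB i | inr (inr j) => fA j end.
exists f; split.
  move=> [[|]|[i|i]] [[|]|[j|j]] //= h.
  all: try by rewrite (fAi _ _ h).
  all: try by rewrite (fBi _ _ h).
  all: try by move: xy; rewrite h adj_irr.
  all: try by move: xy; rewrite -h adj_irr.
  all: try by have := congr1 c h; rewrite ?cA ?cB ?cy; case: (c x).
  all: try by move: (fBin j) xB; rewrite -h => ->.
  all: try by move: (fBin i) xB; rewrite h => ->.
  all: try by move: (fAin j) yA; rewrite -h => ->.
  all: try by move: (fAin i) yA; rewrite h => ->.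
have axA j : adj x (fA j) by move: (subsetP sA _ (fAin j)); rewrite inE.
have ayB j : adj y (fB j) by move: (subsetP sB _ (fBin j)); rewrite inE.
move=> [[|]|[i|i]] [[|]|[j|j]] /=.
all: try by rewrite adj_irr.
all: try by rewrite ?axA ?ayB.
all: try by rewrite adj_sym.
all: try by apply: nonadj; rewrite ?cA ?cB ?cy.
all: try by apply/negbTE; apply: anti.
all: try by apply/negbTE; rewrite adj_sym; apply: anti.
all: try by rewrite adj_sym ?axA ?ayB.
Qed.


Definition farset k (X Y : {set T}) := [set v in X | #|Y| <= #|Y :\: N v| * k].

Lemma far_shrink k a (Y W : {set T}) : W \subset Y -> #|Y| <= #|Y :\: N a| * k ->
  2*k*#|Y :\: W| <= #|Y| -> #|W| <= #|W :\: N a| * (2*k).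
Proof.
move=> sWY h1 h2.
have h3 : #|Y :\: N a| <= #|W :\: N a| + #|Y :\: W|.
  apply: leq_trans (leq_card_setU _ _); apply: subset_leq_card; apply/subsetP => w.
  rewrite !inE; case: (w \in W); case: (w \in Y); by case: (adj a w).
have h4 : #|W| <= #|Y| by apply: subset_leq_card.
exact: (arg3 h3 h1 h2 h4).
Qed.

Lemma kst_few k x y (A W : {set T}) : 0 < k -> adj x y ->
  A \subset N x -> y \notin A -> W \subset N y -> x \notin W ->
  (forall a, a \in A -> #|W| <= #|W :\: N a| * k) -> 2*k*t <= #|W| ->
  #|A| < t * (2*k) ^ t.
Proof.
move=> k0 xy sA yA sW xW hA hW; rewrite ltnNge; apply/negP => hAt; apply: nb.
have [Ai [Bi [sAi sBi cBi cAi anti]]] := greedy k0 hA hW (leqnn t).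
apply: (build_biclaw xy (A := Ai) (B := Bi)).
- exact: subset_trans sAi sA.
- by apply/negP => /(subsetP sAi); rewrite (negbTE yA).
- exact: subset_trans sBi sW.
- by apply/negP => /(subsetP sBi); rewrite (negbTE xW).
- have hp : 0 < (2*k) ^ t by rewrite expn_gt0 muln_gt0 k0.
  by rewrite -(leq_pmul2r hp); apply: leq_trans hAt cAi.
- by rewrite cBi.
- exact: anti.
Qed.


Lemma card_nbI a (X : {set T}) : #|N a :&: X| = \sum_(x in X) adj a x.
Proof.
rewrite -sum1_card big_mkcond /= [RHS]big_mkcond /=; apply: eq_bigr => w _.
by rewrite !inE; case: (w \in X); case: (adj a w).
Qed.

Lemma card_inI (X B : {set T}) : \sum_(x in X) (x \in B) = #|X :&: B|.
Proof.
rewrite -sum1_card big_mkcond /= [RHS]big_mkcond /=; apply: eq_bigr => w _.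
by rewrite !inE; case: (w \in X); case: (w \in B).
Qed.

Lemma in_farset k X Y v : (v \in farset k X Y) = (v \in X) && (#|Y| <= #|Y :\: N v| * k).
Proof. by rewrite inE. Qed.

Lemma base k p y : 0 < k -> adj p y -> 2*(2*k)*t + 1 <= #|N y| ->
  #|farset k (N p) (N y)| <= t * (4*k) ^ t.
Proof.
move=> k0 py hY.
set Y := N y in hY *.
have pY : p \in Y by rewrite /Y inE adj_sym.
have cW : #|Y :\ p| = #|Y| - 1 by have := cardsD1 p Y; rewrite pY; lia.
have hA := @kst_few (2*k) p y
  (farset k (N p) Y :\ y) (Y :\ p).
have : #|farset k (N p) Y :\ y| < t * (2 * (2 * k)) ^ t.
  apply: hA.
  - by rewrite muln_gt0.
  - done.
  - by apply/subsetP => a; rewrite !inE => /andP[_ /andP[]].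
  - by rewrite !inE eqxx.
  - exact: subsetDl.
  - by rewrite !inE eqxx.
  - move=> a; rewrite !inE => /andP[_ /andP[_ ha]].
    apply: (@far_shrink k a Y (Y :\ p)); first exact: subsetDl.
      exact: ha.
    have : #|Y :\: (Y :\ p)| <= 1.
      rewrite -(cards1 p); apply: subset_leq_card; apply/subsetP => w.
      by rewrite !inE; case: (w == p); case: (adj y w).
    move=> h; exact: (arg4 t0 (leq_mul (leqnn (2*k)) h) hY).
  - rewrite cW; lia.
have e := e22 k.
rewrite e => h; rewrite (cardsD1 y (farset k (N p) Y)).
have : (y \in farset k (N p) Y) <= 1 by case: (_ \in _).
lia.
Qed.

Lemma transfer k m1 q p q' (Y : {set T}) : 0 < k -> adj q p -> adj p q' ->
  #|farset (4*k) (N q') Y| <= m1 ->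
  8*k*t <= #|Y| -> 4 * (t * 4 ^ t) + 4*t + 1 <= #|N p| -> 2 * m1 + 4*t + 3 <= #|N q'| ->
  #|farset k (N q) Y| <= 4 * (t * (4*k) ^ t) + t * 4 ^ t.
Proof.
move=> k0 qp pq' hm1 hY hp hq'.
set F := farset k (N q) Y.
set Np' := N p :\ q.
set Nq'' := N q' :\ p.
set m2 := t * 4 ^ t.
set D := t * (4*k) ^ t.
have cNp' : #|Np'| = #|N p| - 1 by rewrite /Np'; have := cardsD1 q (N p); rewrite inE adj_sym qp; lia.
have cNq'' : #|Nq''| = #|N q'| - 1 by rewrite /Nq''; have := cardsD1 p (N q'); rewrite inE adj_sym pq'; lia.
set F' := [set a in F | (a != p) && (#|Np'| > #|Np' :\: N a| * 2)].
have c1 : #|F| <= #|F'| + m2.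
  set A1 := farset 2 (N q :\ p) Np'.
  have hA1 : #|A1| < m2.
    have := @kst_few 2 q p A1 Np'.
    rewrite /m2 -[4]/(2*2); apply => //.
    - by apply/subsetP => a; rewrite !inE => /andP[/andP[_ ->]].
    - by rewrite !inE eqxx.
    - exact: subsetDl.
    - by rewrite !inE eqxx.
    - by move=> a; rewrite inE => /andP[].
    - rewrite cNp'; lia.
  have sF : F \subset F' :|: (p |: A1).
    apply/subsetP => a aF.
    have aq : a \in N q by move: aF; rewrite inE => /andP[].
    rewrite in_setU in_setU1.
    case: (eqVneq a p) => [->|ap]; first by rewrite orbT.
    case h2 : (#|Np'| > #|Np' :\: N a| * 2).
      by apply/orP; left; apply/setIdP; rewrite ap h2.
    apply/orP; right; apply/orP; right; apply/setIdP; split.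
      by rewrite in_setD1 ap aq.
    by rewrite leqNgt h2.
  apply: leq_trans (subset_leq_card sF) _.
  apply: leq_trans (leq_card_setU _ _) _.
  rewrite cardsU1; move: hA1; case: (p \notin A1) => /=; lia.
set Bs := farset 2 (N p :\ q') Nq''.
have hBs : #|Bs| < m2.
  have := @kst_few 2 p q' Bs Nq''.
  rewrite /m2 -[4]/(2*2); apply => //.
  - by apply/subsetP => a; rewrite !inE => /andP[/andP[_ ->]].
  - by rewrite !inE eqxx.
  - exact: subsetDl.
  - by rewrite !inE eqxx.
  - by move=> a; rewrite inE => /andP[].
  - rewrite cNq''; lia.
have hx : forall x, x \in Np' -> x \notin q' |: Bs -> #|N x :&: F'| <= D.
  move=> x xNp; rewrite in_setU1 negb_or => /andP[xq' xBs].
  have xNp0 : x \in N p by move: xNp; rewrite in_setD1 => /andP[].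
  have nf : #|Nq'' :\: N x| * 2 < #|Nq''|.
    rewrite ltnNge; apply/negP => h; move/negP: xBs; apply; apply/setIdP; split.
      by rewrite in_setD1 xq' xNp0.
    exact: h.
  have [g [gNq gx gnf]] : exists g, [/\ g \in Nq'', g \in N x & g \notin farset (4*k) (N q') Y].
    case: (boolP [exists g in Nq'' :&: N x, g \notin farset (4*k) (N q') Y]) => [/existsP[g /andP[]]|hn].
      by rewrite in_setI => /andP[g1 g2] g3; exists g.
    exfalso.
    have sub : Nq'' :&: N x \subset farset (4*k) (N q') Y.
      apply/subsetP => g gI; apply/negPn/negP => gn; move/negP: hn; apply; apply/existsP; exists g.
      by rewrite gI gn.
    have := subset_leq_card sub; have := cardsID (N x) Nq''.
    lia.
  have gq' : g \in N q' by move: gNq; rewrite in_setD1 => /andP[].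
  have gY : #|Y :\: N g| * (4*k) < #|Y|.
    rewrite ltnNge; apply/negP => h; move/negP: gnf; apply; apply/setIdP; split => //.
  have xg : adj x g by move: gx; rewrite inE.
  set A := (N x :&: F') :\ g.
  set W := (N g :&: Y) :\ x.
  have sWY : W \subset Y by apply/subsetP => w; rewrite in_setD1 in_setI => /andP[_ /andP[]].
  have sYW : #|Y :\: W| <= #|Y :\: N g| + 1.
    rewrite -(cards1 x); apply: leq_trans (leq_card_setU _ _); apply: subset_leq_card; apply/subsetP => w.
    rewrite in_setU in_setD in_setD in_setD1 in_setI in_set1.
    case: (w == x); case: (w \in Y); by case: (w \in N g).
  have cW : #|W| + #|Y :\: W| = #|Y| by have := cardsID W Y; rewrite (setIidPr sWY).
  have hA : #|A| < t * (2 * (2*k)) ^ t.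
    apply: (@kst_few (2*k) x g A W).
    - by rewrite muln_gt0.
    - done.
    - by apply/subsetP => a; rewrite in_setD1 in_setI => /andP[_ /andP[-> _]].
    - by rewrite in_setD1 eqxx.
    - by apply/subsetP => w; rewrite in_setD1 in_setI => /andP[_ /andP[-> _]].
    - by rewrite in_setD1 eqxx.
    - move=> a; rewrite in_setD1 in_setI => /andP[_ /andP[_ aF']].
      have aF : a \in F by move: aF' => /setIdP[].
      have ha : #|Y| <= #|Y :\: N a| * k by move: aF => /setIdP[].
      apply: (@far_shrink k a Y W) => //.
      exact: (ar1 t0 (leq_mul (leqnn (2*k)) sYW) gY hY).
    - exact: (ar2 k0 t0 sYW cW gY hY).
  have e := e22 k.
  rewrite e in hA.
  have := cardsD1 g (N x :&: F'); rewrite -/A => hc.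
  have hb : (g \in N x :&: F') <= 1 by case: (_ \in _).
  move: hA; rewrite /D; clear - hc hb; lia.
have E1 : \sum_(a in F') #|N a :&: Np'| = \sum_(x in Np') #|N x :&: F'|.
  under eq_bigr => a _ do rewrite card_nbI.
  under [RHS]eq_bigr => x _ do rewrite card_nbI.
  rewrite exchange_big /=; apply: eq_bigr => x _; apply: eq_bigr => a _; by rewrite adj_sym.
have Lo : #|F'| * #|Np'| <= 2 * \sum_(a in F') #|N a :&: Np'|.
  rewrite big_distrr /= -sum_nat_const; apply: leq_sum => a aF'.
  have := cardsID (N a) Np'; rewrite [Np' :&: _]setIC.
  have : #|Np' :\: N a| * 2 < #|Np'| by move: aF' => /setIdP[_ /andP[]].
  lia.
have Up : \sum_(x in Np') #|N x :&: F'| <= #|Np'| * D + m2 * #|F'|.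
  apply: leq_trans (_ : \sum_(x in Np') (D + (x \in q' |: Bs) * #|F'|) <= _).
    apply: leq_sum => x xNp; case: (boolP (x \in q' |: Bs)) => xb.
      rewrite mul1n; apply: leq_trans (leq_addl _ _); apply: subset_leq_card; exact: subsetIr.
    rewrite mul0n addn0; exact: hx.
  rewrite big_split /= sum_nat_const -big_distrl /= card_inI.
  have : #|Np' :&: (q' |: Bs)| <= m2.
    apply: leq_trans (subset_leq_card (subsetIr _ _)) _.
    rewrite cardsU1; move: hBs; case: (_ \notin _) => /=; lia.
  move=> h; rewrite leq_add2l; exact: leq_mul h (leqnn _).
have hNp : 4 * m2 + 1 <= #|Np'| by rewrite cNp' /m2; lia.
have hF' : #|F'| <= 4 * D.
  apply: (ar3 hNp); rewrite -E1 in Up; lia.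
lia.
Qed.
End G.
Unset Implicit Arguments.

Definition Kof {R : realType} (eps : R) : nat := (Num.truncn (eps^-1)).+1.
Definition Cbig (t k : nat) : nat := 20 * t * (64 * k) ^ t + 64 * k * t + 10.

Lemma eps_far (R : realType) (eps : R) (n a d : nat) : (0 < eps)%R ->
  a + d = n -> (a%:R <= (1 - eps) * n%:R)%R -> n <= d * Kof eps.
Proof.
move=> e0 had ha.
have hk : (1 < eps * (Kof eps)%:R)%R.
  have h := truncnS_gt (eps^-1).
  by rewrite -[X in (X < _)%R](mulfV (lt0r_neq0 e0)) ltr_pM2l.
have hd : (eps * n%:R <= d%:R)%R.
  have : (n%:R = a%:R + d%:R :> R)%R by rewrite -natrD had.
  lra.
have n0 : (0 <= n%:R :> R)%R by apply: ler0n.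
suff : (n%:R <= (d * Kof eps)%:R :> R)%R by rewrite ler_nat.
rewrite natrM.
have K0 : (0 <= (Kof eps)%:R :> R)%R by apply: ler0n.
have h1 := ler_wpM2r K0 hd.
have h2 : (n%:R * 1 <= n%:R * (eps * (Kof eps)%:R) :> R)%R by apply: ler_wpM2l => //; apply: ltW.
rewrite mulr1 in h2.
apply: le_trans h2 _; apply: le_trans h1; by rewrite mulrA [(n%:R * eps)%R]mulrC.
Qed.

Theorem mainTheorem7 (R : realType) :
  exists C4 : nat -> R -> nat,
  forall (t : nat) (eps : R), (0 < t)%N -> (0 < eps)%R -> (eps < 1)%R ->
  forall (T : finType) (adj : rel T),
    symmetric adj -> irreflexive adj -> bipartite adj ->
    (forall v : T, (C4 t eps <= #|nbhd adj v|)%N) ->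
    ~ has_induced_biclaw adj t t ->
    forall x1 x2 x3 x4 x5 x6 : T,
      uniq [:: x1; x2; x3; x4; x5; x6] ->
      adj x1 x2 -> adj x2 x3 -> adj x3 x4 -> adj x4 x5 -> adj x5 x6 ->
      (#|Sset adj (nbhd adj x1) (nbhd adj x6) eps| <= C4 t eps)%N.
Proof.
exists (fun t eps => Cbig t (Kof eps)).
move=> t eps t0 e0 e1 T adj sym irr [c bip] hdeg nb x1 x2 x3 x4 x5 x6 _ a12 a23 a34 a45 a56.
set k := Kof eps.
have k0 : 0 < k by [].
set Y := nbhd adj x6.
set P := (64 * k) ^ t.
have P1 : 64 * k <= P by rewrite /P -{1}(expn1 (64 * k)) leq_pexp2l // muln_gt0.
have Pa : 4 ^ t <= P by rewrite /P leq_exp2r //; lia.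
have Pb : (4 * k) ^ t <= P by rewrite /P leq_exp2r //; lia.
have Pc : (4 * (4 * k)) ^ t <= P by rewrite /P leq_exp2r //; lia.
have Pd : 4 * (4 * (4 * k)) = 64 * k by lia.
have tPa : t * 4 ^ t <= t * P by rewrite leq_mul2l Pa orbT.
have tPb : t * (4 * k) ^ t <= t * P by rewrite leq_mul2l Pb orbT.
have tPc : t * (4 * (4 * k)) ^ t <= t * P by rewrite leq_mul2l Pc orbT.
have tP1 : t <= t * P by rewrite -{1}(muln1 t) leq_mul2l; apply/orP; right; lia.
have kt : 64 * k <= 64 * k * t by rewrite -{1}(muln1 (64 * k)) leq_mul2l t0 orbT.
have hd v : 20 * (t * P) + 64 * k * t + 10 <= #|nbhd adj v|.
  by have := hdeg v; rewrite /= /Cbig -/k -/P mulnA.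
have hY := hd x6; rewrite -/Y in hY.
have s1 := base sym irr bip t0 nb (k := 4 * (4 * k)) (muln_gt0 _ _) a56.
have s1' : #|farset adj (4 * (4 * k)) (nbhd adj x5) Y| <= t * P.
  rewrite /P -Pd; apply: s1; rewrite -/Y; lia.
have s2 : #|farset adj (4 * k) (nbhd adj x3) Y| <= 4 * (t * (4 * (4 * k)) ^ t) + t * 4 ^ t.
  apply: (transfer sym irr bip t0 nb (m1 := t * P) _ a34 a45) => //.
  all: try by rewrite muln_gt0.
  - lia.
  - have := hd x4; lia.
  - have := hd x5; lia.
have s3 : #|farset adj k (nbhd adj x1) Y| <= 4 * (t * (4 * k) ^ t) + t * 4 ^ t.
  apply: (transfer sym irr bip t0 nb (m1 := 4 * (t * (4 * (4 * k)) ^ t) + t * 4 ^ t) _ a12 a23) => //.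
  - lia.
  - have := hd x2; lia.
  - have := hd x3; lia.
have sub : Sset adj (nbhd adj x1) Y eps \subset farset adj k (nbhd adj x1) Y.
  apply/subsetP => s; rewrite inE => /andP[sX hs].
  apply/setIdP; split => //.
  rewrite /k; apply: (@eps_far R eps #|Y| _ #|Y :\: nbhd adj s| e0 _ hs).
  by rewrite -(cardsID (nbhd adj s) Y) setIC.
apply: leq_trans (subset_leq_card sub) _.
apply: leq_trans s3 _.
rewrite /Cbig -/k -/P; lia.
Qed.
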